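(* Let $k\subset K$ be differential fields of characteristic zero with the same field of constants $C$, assumed algebraically closed, and assume there is $x\in k$ with $x'=1$. Let $f_1,\dots,f_n\in K$ be iterated integrals over $k$. If $f_1,\dots,f_n$ are algebraically dependent over $k$, then there exist $u_1,\dots,u_n\in k$, not all zero, such that $u_1f_1+\cdots+u_nf_n\in k$.
   Context: An element $f\in K$ is an iterated integral over $k$ if $f^{(m)}\in k$ for some $m\in\mathbb{N}$. Here $k$ need not be algebraically closed. *)

(* Defs.v *)
From HB Require Import structures.
From mathcomp Require Import all_boot all_order all_algebra.
From mathcomp Require Import mpoly.
Set Implicit Arguments. Unset Strict Implicit. Unset Printing Implicit Defensive.
Import Order.TTheory GRing.Theory.
Local Open Scope ring_scope.

Definition derivation (K : fieldType) (D : K -> K) : Prop :=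
  (forall a b, D (a + b) = D a + D b) /\ (forall a b, D (a * b) = D a * b + a * D b).

Definition char0 (K : fieldType) : Prop := forall n : nat, (n.+1)%:R != 0 :> K.

Definition diff_subfield (K : fieldType) (D : K -> K) (k : pred K) : Prop :=
  0 \in k /\ 1 \in k /\
  (forall a b, a \in k -> b \in k -> a + b \in k) /\
  (forall a, a \in k -> - a \in k) /\
  (forall a b, a \in k -> b \in k -> a * b \in k) /\
  (forall a, a \in k -> a^-1 \in k) /\
  (forall a, a \in k -> D a \in k).

Definition same_constants (K : fieldType) (D : K -> K) (k : pred K) : Prop :=
  forall c, D c = 0 -> c \in k.

Definition constants_alg_closed (K : fieldType) (D : K -> K) : Prop :=
  forall p : {poly K}, (forall i, D p`_i = 0) -> (1 < size p)%N ->
    exists c, D c = 0 /\ root p c.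

Definition iterated_integral (K : fieldType) (D : K -> K) (k : pred K) (f : K) : Prop :=
  exists m : nat, iter m D f \in k.

Definition alg_dependent (K : fieldType) (k : pred K) (n : nat) (f : 'I_n -> K) : Prop :=
  exists P : {mpoly K[n]}, [/\ P != 0, (forall m, P@_m \in k) & P.@[f] = 0].

(* Main.v *)
Require Import Defs.
From HB Require Import structures.
From mathcomp Require Import all_boot all_order all_algebra.
From mathcomp Require Import mpoly.
From mathcomp Require Import ring.
From mathcomp Require Import zify.
Import Order.TTheory GRing.Theory.
Local Open Scope ring_scope.

Set Implicit Arguments. Unset Strict Implicit. Unset Printing Implicit Defensive.

Section SubF.
Variables (F : fieldType) (S : divringClosed F).
Inductive subB := mkB x & x \in S.
Definition vB u := let: mkB x _ := u in x.
HB.instance Definition _ := [isSub for vB].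
HB.instance Definition _ := [Choice of subB by <:].
HB.instance Definition _ := [SubChoice_isSubIntegralDomain of subB by <:].
HB.instance Definition _ := [SubIntegralDomain_isSubField of subB by <:].
End SubF.

Lemma comp_mpolyA (K : fieldType) n r q (p : {mpoly K[n]})
  (lq : n.-tuple {mpoly K[r]}) (lq' : r.-tuple {mpoly K[q]}) :
  (p \mPo lq) \mPo lq' = p \mPo [tuple (tnth lq i \mPo lq') | i < n].
Proof.
rewrite [p \mPo lq]comp_mpolyE [RHS]comp_mpolyE raddf_sum /=; apply: eq_bigr => m _.
rewrite comp_mpolyZ rmorph_prod; congr (_ *: _); apply: eq_bigr => i _.
by rewrite rmorphXn tnth_mktuple.
Qed.

Section Basics.
Variables (K : fieldType) (D : K -> K) (k : pred K).
Hypothesis HD : derivation D.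
Hypothesis Hk : diff_subfield D k.
Hypothesis H0 : char0 K.
Hypothesis Hc : same_constants D k.

Lemma DD a b : D (a + b) = D a + D b. Proof. by case: HD. Qed.
Lemma DM a b : D (a * b) = D a * b + a * D b. Proof. by case: HD. Qed.
Lemma D0 : D 0 = 0.
Proof. by apply: (@addrI _ (D 0)); rewrite -DD !addr0. Qed.
Lemma DN a : D (- a) = - D a.
Proof. by apply/eqP; rewrite -addr_eq0 -DD addNr D0. Qed.
Lemma DB a b : D (a - b) = D a - D b. Proof. by rewrite DD DN. Qed.
Lemma D_sum (I : Type) (r : seq I) (P : pred I) F :
  D (\sum_(i <- r | P i) F i) = \sum_(i <- r | P i) D (F i).
Proof. exact: (big_morph D DD D0). Qed.
Lemma DMn a m : D (a *+ m) = D a *+ m.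
Proof. by elim: m => [|m IH]; rewrite ?mulr0n ?D0 // !mulrS DD IH. Qed.
Lemma D1 : D 1 = 0.
Proof.
have := DM 1 1; rewrite !mul1r mulr1 -{1}(addr0 (D 1)) => /addrI.
by move=> <-.
Qed.
Lemma Dnat m : D m%:R = 0. Proof. by rewrite DMn D1 mul0rn. Qed.
Lemma DX a m : D (a ^+ m.+1) = m.+1%:R * a ^+ m * D a.
Proof.
elim: m => [|m IH]; first by rewrite expr1 expr0 mulr1 mul1r.
rewrite [in LHS]exprS DM IH exprS.
have -> : m.+2%:R = m.+1%:R + 1 :> K by rewrite natr1.
ring.
Qed.
Lemma DZc c a : D c = 0 -> D (c * a) = c * D a.
Proof. by move=> Dc; rewrite DM Dc mul0r add0r. Qed.
Lemma DV c : c != 0 -> D c = 0 -> D c^-1 = 0.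
Proof.
move=> c0 Dc; have := DM c c^-1; rewrite mulfV // D1 Dc mul0r add0r.
by move/esym/eqP; rewrite mulf_eq0 (negPf c0) => /eqP.
Qed.
Lemma natr_neq0 m : m.+1%:R != 0 :> K. Proof. exact: H0. Qed.

Lemma k_closed : GRing.divring_closed k.
Proof.
case: Hk => k0 [k1 [kD [kN [kM [kV _]]]]]; split => // u v ku kv.
  by apply: kD => //; apply: kN.
by apply: kM => //; apply: kV.
Qed.

Definition kS : divringClosed K :=
  HB.pack (k : {pred K}) (GRing.isDivringClosed.Build K k k_closed).

Lemma kSE x : (x \in kS) = (x \in k). Proof. by []. Qed.
Lemma kDer a : a \in k -> D a \in k.
Proof. by case: Hk => _ [_ [_ [_ [_ [_ H]]]]]; apply: H. Qed.


Section Del.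
Variables (r : nat) (y : 'I_r -> K).

Definition dco (Q : {mpoly K[r]}) : {mpoly K[r]} :=
  \sum_(m <- msupp Q) D Q@_m *: 'X_[m].
Definition nu (Q : {mpoly K[r]}) : {mpoly K[r]} :=
  \sum_s D (y s) *: Q^`M(s).
Definition del Q := dco Q + nu Q.

Lemma mcoeff_dco Q m : (dco Q)@_m = D Q@_m.
Proof.
rewrite /dco raddf_sum /=.
under eq_bigr do rewrite mcoeffZ mcoeffX.
case: (boolP (m \in msupp Q)) => hm.
  rewrite (bigD1_seq m) ?msupp_uniq //= eqxx mulr1 big1 ?addr0 // => m' /negPf.
  by rewrite eq_sym => ->; rewrite mulr0.
rewrite (memN_msupp_eq0 hm) D0 big1_seq // => m' /= hm'.
have /negPf -> : m' != m by apply: contraNneq hm => <-.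
by rewrite mulr0.
Qed.

Lemma mcoeff_nu Q m :
  (nu Q)@_m = \sum_s D (y s) * (Q@_(m + U_(s)) *+ (m s).+1).
Proof.
by rewrite /nu raddf_sum; apply: eq_bigr => s _ /=; rewrite mcoeffZ mcoeff_deriv.
Qed.

Lemma dcoD P Q : dco (P + Q) = dco P + dco Q.
Proof. by apply/mpolyP => m; rewrite mcoeffD !mcoeff_dco mcoeffD DD. Qed.
Lemma nuD P Q : nu (P + Q) = nu P + nu Q.
Proof.
by rewrite /nu -big_split; apply: eq_bigr => s _; rewrite mderivD scalerDr.
Qed.
Lemma delD P Q : del (P + Q) = del P + del Q.
Proof. by rewrite /del dcoD nuD; ring. Qed.
Lemma del0 : del 0 = 0.
Proof. by apply: (@addrI _ (del 0)); rewrite -delD !addr0. Qed.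
Lemma nuZ c P : nu (c *: P) = c *: nu P.
Proof.
rewrite /nu scaler_sumr; apply: eq_bigr => s _.
by rewrite mderivZ !scalerA mulrC.
Qed.
Lemma dcoZX c m : dco (c *: 'X_[m]) = D c *: 'X_[m].
Proof.
apply/mpolyP => m'; rewrite mcoeff_dco !mcoeffZ mcoeffX DM.
by rewrite Dnat // mulr0 addr0.
Qed.
Lemma nuM P Q : nu (P * Q) = nu P * Q + P * nu Q.
Proof.
rewrite /nu mulr_suml mulr_sumr -big_split; apply: eq_bigr => s _ /=.
by rewrite mderivM scalerDr scalerAl scalerAr.
Qed.

Lemma nuXU s : nu 'X_s = (D (y s))%:MP.
Proof.
rewrite /nu (bigD1 s) //= big1 ?addr0 => [|t ts].
  rewrite mderivX mnm1E eqxx /=.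
  have -> : (U_(s) - U_(s))%MM = 0%MM.
    by apply/mnmP => i; rewrite mnmBE mnm0E subnn.
  by rewrite mpolyX0 scale1r -mpolyC1 -mul_mpolyC -mpolyCM mulr1.
by rewrite mderivX mnm1E eq_sym (negPf ts) scale0r scaler0.
Qed.

Lemma nu1 : nu 1 = 0.
Proof.
by rewrite /nu big1 // => s _; rewrite -mpolyC1 mderivC scaler0.
Qed.

Lemma E_mono m : (nu 'X_[m]).@[y] = D ('X_[m] : {mpoly K[r]}).@[y].
Proof.
move: {2}(mdeg m) (erefl (mdeg m)) => d; elim: d m => [|d IH] m hm.
  move/eqP: hm; rewrite mdeg_eq0 => /eqP ->.
  by rewrite mpolyX0 nu1 meval0 meval1 D1.
case: (pickP (fun s => m s != 0%N)) => [s ms|hall]; last first.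
  suff m0 : m = 0%MM by move: hm; rewrite m0 mdeg0.
  by apply/mnmP => i; rewrite mnm0E; move: (hall i) => /= /negbFE /eqP.
have hmU : m = ((m - U_(s)) + U_(s))%MM by rewrite submK // lep1mP.
rewrite hmU mpolyXD nuM mevalD !mevalM IH; last first.
  by move: hm; rewrite {1}hmU mdegD mdeg1 addn1 => -[].
by rewrite nuXU mevalC mevalXU DM.
Qed.

Lemma E Q : (del Q).@[y] = D (Q.@[y]).
Proof.
elim/mpolyind: Q => [|c m p _ _ IH]; first by rewrite del0 !meval0 D0.
rewrite delD mevalD IH [in RHS]mevalD DD; congr (_ + _).
by rewrite /del mevalD dcoZX nuZ !mevalZ E_mono DM.
Qed.

Lemma dco_deriv t Q : (dco Q)^`M(t) = dco (Q^`M(t)).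
Proof.
by apply/mpolyP => m; rewrite mcoeff_deriv !mcoeff_dco mcoeff_deriv DMn.
Qed.
Lemma nu_deriv t Q : (nu Q)^`M(t) = nu (Q^`M(t)).
Proof.
rewrite /nu raddf_sum /=; apply: eq_bigr => s _.
by rewrite mderivZ mderiv_comm.
Qed.
Lemma del_deriv t Q : (del Q)^`M(t) = del (Q^`M(t)).
Proof. by rewrite /del mderivD dco_deriv nu_deriv. Qed.

End Del.

Section KO.
Variables (r : nat) (y : 'I_r -> K).
Hypothesis Hy : forall s, D (y s) \in k.

Let S := kS.
Let kE x : (x \in S) = (x \in k). Proof. by []. Qed.

Lemma del_k Q : (forall m, Q@_m \in k) -> forall m, (del y Q)@_m \in k.
Proof.
move=> hQ m; rewrite mcoeffD mcoeff_dco mcoeff_nu -kE.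
apply: rpredD; first by rewrite kE; apply: kDer.
by apply: rpred_sum => s _; apply: rpredM; [rewrite kE | apply: rpredMn; rewrite kE].
Qed.

Lemma lt_lead (m0 : 'X_{1..r}) (R : {mpoly K[r]}) :
  R != 0 -> (forall m, (m0 <= m)%O -> R@_m = 0) -> (mlead R < m0)%O.
Proof.
move=> R0 h; rewrite ltNge; apply/negP => /h /eqP.
by rewrite mleadc_eq0 (negPf R0).
Qed.

Lemma mulrn_eq0' (c : K) j : c *+ j.+1 = 0 -> c = 0.
Proof.
by rewrite -mulr_natr => /eqP; rewrite mulf_eq0 (negPf (natr_neq0 _)) orbF => /eqP.
Qed.

Definition relation_ok := exists s0 (c : 'I_r -> K),
  [/\ c s0 = 1, forall s, c s \in k & \sum_s c s * y s \in k].

Lemma KO (Q : {mpoly K[r]}) : Q != 0 -> (forall m, Q@_m \in k) -> Q.@[y] = 0 ->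
  relation_ok.
Proof.
move: {2}(mlead Q) (erefl (mlead Q)) => m0; move: Q; elim/(@ltmwf r): m0 => m0 IH Q eQ Q0 Qk Qy.
pose c0 := Q@_m0.
have c0n : c0 != 0 by rewrite /c0 -eQ mleadc_eq0.
pose Q1 := c0^-1 *: Q.
have Q1k : forall m, Q1@_m \in k.
  by move=> m; rewrite mcoeffZ -kE rpredM ?rpredV // kE // /c0.
have Q1y : Q1.@[y] = 0 by rewrite mevalZ Qy mulr0.
have c0i : c0^-1 != 0 by rewrite invr_eq0.
have Q1n : Q1 != 0 by rewrite mscalerI negb_or c0i.
have eQ1 : mlead Q1 = m0 by rewrite mleadZ.
have Q1m0 : Q1@_m0 = 1 by rewrite mcoeffZ mulVf.
have Hgt m : (m0 < m)%O -> Q1@_m = 0 by rewrite -eQ1; apply: mcoeff_gt_mlead.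
have m0n : m0 != 0%MM.
  apply/negP => /eqP m00.
  have : (msize Q1 <= 1)%N by rewrite -mlead_deg // eQ1 m00 mdeg0.
  move/msize1_polyC => hQ1; move: Q1y; rewrite hQ1 mevalC -m00 Q1m0 => /eqP.
  by rewrite oner_eq0.
have Hlt m t : (m0 <= m)%O -> (m0 < (m + U_(t))%MM)%O.
  move=> h; apply: (le_lt_trans h); apply: lt_mdeg_ltmc.
  by rewrite mdegD mdeg1 addn1.
have Hn0 m : (m0 <= m)%O -> m != 0%MM.
  move=> h; apply: contra m0n => /eqP m_0; move: h; rewrite m_0 => h.
  by apply/eqP/le_anti; rewrite h le0m.
case: (eqVneq (del y Q1) 0) => [dQ1|Rn]; last first.
  apply: (IH (mlead (del y Q1)) _ (del y Q1) erefl Rn).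
  - apply: lt_lead => // m hm; rewrite mcoeffD mcoeff_dco mcoeff_nu big1.
      rewrite addr0; move: hm; rewrite le_eqVlt => /orP[/eqP <-|/Hgt ->].
        by rewrite Q1m0 D1.
      by rewrite D0.
    by move=> s _; rewrite Hgt ?mul0rn ?mulr0 // Hlt.
  - exact: del_k.
  - by rewrite E Q1y D0.
have dconst t : Q1^`M(t) = ((Q1^`M(t)).@[y])%:MP \/ relation_ok.
  set T := Q1^`M(t); set ct := T.@[y].
  have Dct : D ct = 0 by rewrite /ct -E /T -del_deriv dQ1 mderiv0 meval0.
  have ctk : ct \in k by apply: Hc.
  case: (eqVneq (T - ct%:MP) 0) => [/eqP|Rn]; first by rewrite subr_eq0 => /eqP; left.
  right; apply: (IH (mlead (T - ct%:MP)) _ (T - ct%:MP) erefl Rn).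
  - apply: lt_lead => // m hm; rewrite mcoeffB mcoeff_deriv Hgt ?mul0rn; last exact: Hlt.
    by rewrite mcoeffC (negPf (Hn0 _ hm)) mulr0 subr0.
  - move=> m; rewrite mcoeffB mcoeff_deriv mcoeffC -kE rpredB // ?rpredMn ?rpredM //.
    by rewrite rpred_nat.
  - by rewrite mevalB mevalC subrr.
case: (pickP (fun t => ~~ (Q1^`M(t) == ((Q1^`M(t)).@[y])%:MP))) => [t /negP ht|hall].
  by case: (dconst t) => // h; case: ht; rewrite {1}h.
have dc t : Q1^`M(t) = ((Q1^`M(t)).@[y])%:MP by move: (hall t) => /= /negbFE /eqP.
have Hdeg2 m : (1 < mdeg m)%N -> Q1@_m = 0.
  move=> hm.
  case: (pickP (fun s => m s != 0%N)) => [s ms|hall']; last first.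
    suff m_0 : m = 0%MM by move: hm; rewrite m_0 mdeg0.
    by apply/mnmP => i; rewrite mnm0E; move: (hall' i) => /= /negbFE /eqP.
  have hmU : m = ((m - U_(s)) + U_(s))%MM by rewrite submK // lep1mP.
  have := mcoeff_deriv s (m - U_(s))%MM Q1; rewrite -hmU dc mcoeffC.
  have /negPf -> : (m - U_(s))%MM != 0%MM.
    rewrite -mdeg_eq0; move: hm; rewrite {1}hmU mdegD mdeg1 addn1 ltnS.
    by case: (mdeg _).
  by rewrite mulr0 => /esym /mulrn_eq0'.
have m0deg : mdeg m0 = 1%N.
  have : mdeg m0 != 0%N by rewrite mdeg_eq0.
  case: (ltngtP (mdeg m0) 1) => // [|h _]; first by case: (mdeg m0).
  by move: Q1m0; rewrite Hdeg2 // => /eqP; rewrite eq_sym oner_eq0.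
have [s0 es0] : exists s0, m0 = U_(s0)%MM.
  by move/eqP: m0deg => /mdeg1P [s0 /eqP e0]; exists s0.
have Q1E : Q1 = (Q1@_0%MM)%:MP + \sum_s Q1@_(U_(s)%MM) *: 'X_s.
  apply/mpolyP => m; rewrite mcoeffD mcoeffC raddf_sum /=.
  under eq_bigr do rewrite mcoeffZ mcoeffX.
  case: (eqVneq m 0%MM) => [->|mn0].
    rewrite mulr1 big1 ?addr0 // => s _.
    by rewrite mnm1_eq0 mulr0.
  rewrite mulr0 add0r.
  case: (ltngtP (mdeg m) 1) => [|hm|hm].
  - by rewrite ltnS leqn0 mdeg_eq0 (negPf mn0).
  - rewrite Hdeg2 // big1 // => s _.
    have /negPf -> : U_(s)%MM != m.
      by apply/eqP => e; move: hm; rewrite -e mdeg1.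
    by rewrite mulr0.
  - have /mdeg1P [t /eqP ->] : mdeg m == 1%N by rewrite hm.
    rewrite (bigD1 t) //= eqxx mulr1 big1 ?addr0 // => s st.
    by rewrite eq_mnm1 (negPf st) mulr0.
exists s0, (fun s => Q1@_(U_(s)%MM)); split => //.
- by rewrite -es0.
- have := Q1y; rewrite {1}Q1E mevalD mevalC raddf_sum /=.
  under eq_bigr do rewrite mevalZ mevalXU.
  move/eqP; rewrite addrC addr_eq0 => /eqP ->.
  by rewrite -kE rpredN kE.
Qed.

End KO.

Section Lin.
Let T := subB kS.

Lemma lin n r (L : 'I_n -> 'I_r -> K) : (forall i s, L i s \in k) ->
  (exists u : 'I_n -> K, [/\ forall i, u i \in k, exists i, u i != 0 &
      forall s, \sum_i u i * L i s = 0]) \/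
  (exists R : 'I_r -> 'I_n -> K, forall i j, \sum_s L i s * R s j = (i == j)%:R).
Proof.
move=> Lk.
pose LT : 'M[T]_(n, r) := \matrix_(i, s) insubd (0 : T) (L i s).
have LTE i s : val (LT i s) = L i s by rewrite mxE insubdK //; apply: Lk.
case: (boolP (row_free LT)) => [/row_freeP [B0 hB]|nf].
  right; exists (fun s j => val (B0 s j)) => i j.
  have := congr1 (fun M : 'M[T]_n => val (M i j)) hB; rewrite !mxE rmorph_sum rmorph_nat.
  move=> <-; apply: eq_bigr => s _; by rewrite rmorphM -LTE.
left; move: nf; rewrite -kermx_eq0 => nz.
have [i0 [j0 hij]] : exists i0 j0, kermx LT i0 j0 != 0.
  case: (pickP (fun p : 'I_n * 'I_n => kermx LT p.1 p.2 != 0)) => [[i0 j0] h|hall].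
    by exists i0, j0.
  case/negP: nz; apply/eqP/matrixP => i j.
  by move: (hall (i, j)) => /= /negbFE /eqP ->; rewrite mxE.
exists (fun j => val (kermx LT i0 j)); split.
- by move=> j; case: (kermx LT i0 j).
- by exists j0; rewrite fmorph_eq0.
- move=> s; have := congr1 (fun M : 'M[T]_(n, r) => val (M i0 s)) (mulmx_ker LT).
  rewrite !mxE rmorph_sum rmorph0 => h; rewrite -[RHS]h; apply: eq_bigr => j _.
  by rewrite rmorphM -LTE.
Qed.
End Lin.

Section Comb.
Let S := kS.
Let kE x : (x \in S) = (x \in k). Proof. by []. Qed.

Definition kcomb (ys : seq K) (phi : K) := exists b (c : nat -> K),
  [/\ b \in k, forall i, c i \in k & phi = b + \sum_(i < size ys) c i * ys`_i].

Lemma kcomb_k ys b : b \in k -> kcomb ys b.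
Proof.
move=> hb; exists b, (fun _ => 0); split => //; first by move=> i; rewrite -kE rpred0.
by rewrite big1 ?addr0 // => i _; rewrite mul0r.
Qed.

Lemma kcombD ys p q : kcomb ys p -> kcomb ys q -> kcomb ys (p + q).
Proof.
move=> [b1 [c1 [hb1 hc1 e1]]] [b2 [c2 [hb2 hc2 e2]]].
exists (b1 + b2), (fun i => c1 i + c2 i); split.
- by rewrite -kE rpredD.
- by move=> i; rewrite -kE rpredD.
- rewrite e1 e2; under [in RHS]eq_bigr do rewrite mulrDl.
  rewrite big_split /=; ring.
Qed.

Lemma kcombZ ys u p : u \in k -> kcomb ys p -> kcomb ys (u * p).
Proof.
move=> hu [b [c [hb hc e]]]; exists (u * b), (fun i => u * c i); split.
- by rewrite -kE rpredM.
- by move=> i; rewrite -kE rpredM.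
- by rewrite e mulrDr mulr_sumr; congr (_ + _); apply: eq_bigr => i _; rewrite mulrA.
Qed.

Lemma kcombB ys p q : kcomb ys p -> kcomb ys q -> kcomb ys (p - q).
Proof.
move=> hp hq; apply: kcombD => //; rewrite -mulN1r; apply: kcombZ => //.
by rewrite -kE rpredN rpred1.
Qed.

Lemma kcomb_sum ys (I : Type) (r : seq I) (P : pred I) F :
  (forall i, P i -> kcomb ys (F i)) -> kcomb ys (\sum_(i <- r | P i) F i).
Proof.
move=> h; apply: (big_ind (kcomb ys)) => //; first by apply: kcomb_k; rewrite -kE rpred0.
exact: kcombD.
Qed.

Lemma kcomb_mem ys z : z \in ys -> kcomb ys z.
Proof.
move=> hz; have hi : (index z ys < size ys)%N by rewrite index_mem.
exists 0, (fun i => (i == index z ys)%:R); split.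
- by rewrite -kE rpred0.
- by move=> i; rewrite -kE rpred_nat.
- rewrite add0r (bigD1 (Ordinal hi)) //= eqxx mul1r nth_index // big1 ?addr0 //.
  move=> i ne; have /negPf -> : (nat_of_ord i) != index z ys.
    by apply: contra ne => /eqP e; apply/eqP/val_inj.
  by rewrite mul0r.
Qed.

Lemma kcomb_trans zs ws phi : kcomb zs phi ->
  (forall z, z \in zs -> kcomb ws z) -> kcomb ws phi.
Proof.
move=> [b [c [hb hc ->]]] h; apply: kcombD; first exact: kcomb_k.
apply: kcomb_sum => i _; apply: kcombZ => //; apply: h; exact: mem_nth.
Qed.

End Comb.

Section Tay.
Variables (x : K).
Hypothesis Hx : x \in k.
Hypothesis Dx : D x = 1.
Let S := kS.
Let kE z : (z \in S) = (z \in k). Proof. by []. Qed.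

Lemma tay m : forall phi, iter m D phi \in k -> exists ys (js : seq nat) b,
  [/\ all (fun z => D z \in k) ys, b \in k &
     phi = b + \sum_(i < size ys) x ^+ (nth 0%N js i) * ys`_i].
Proof.
elim: m => [|m IH] phi hphi.
  by exists [::], [::], phi; split=> //; rewrite big_ord0 addr0.
rewrite iterSr in hphi; have [ys [js [b [hys hb e]]]] := IH _ hphi.
pose cc i := ((nth 0%N js i).+1%:R : K).
have ccn i : cc i != 0 by apply: natr_neq0.
have Dcc i : D (cc i)^-1 = 0 by apply: DV => //; apply: Dnat.
have yint i : (i < size ys)%N -> D ys`_i \in k.
  by move=> hi; apply: (allP hys); apply: mem_nth.
pose zs := mkseq (fun i => ys`_i / cc i) (size ys).
have zsE i : (i < size ys)%N -> zs`_i = ys`_i / cc i by move=> hi; rewrite nth_mkseq.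
have Dzs i : (i < size ys)%N -> D zs`_i = D ys`_i / cc i.
  by move=> hi; rewrite zsE // DM Dcc mulr0 addr0.
pose A := \sum_(i < size ys) x ^+ (nth 0%N js i).+1 * zs`_i.
pose psi := phi - A.
exists (psi :: zs), (0%N :: mkseq (fun i => (nth 0%N js i).+1) (size ys)), 0; split.
- rewrite /= ; apply/andP; split; last first.
    apply/allP => z /mapP [i]; rewrite mem_iota add0n => /andP [_ hi] ->.
    by rewrite -zsE // Dzs // -kE rpredM ?rpredV ?rpred_nat // kE yint.
  have -> : D psi = b - \sum_(i < size ys) x ^+ (nth 0%N js i).+1 * D zs`_i.
    rewrite /psi /A DB D_sum e.
    have -> : \sum_(i < size ys) D (x ^+ (nth 0%N js i).+1 * zs`_i) =
      \sum_(i < size ys) ((nth 0%N js i).+1%:R * x ^+ nth 0%N js i * zs`_i +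
                           x ^+ (nth 0%N js i).+1 * D zs`_i).
      by apply: eq_bigr => i _; rewrite DM DX Dx mulr1.
    rewrite big_split /=.
    have -> : \sum_(i < size ys) (nth 0%N js i).+1%:R * x ^+ nth 0%N js i * zs`_i =
              \sum_(i < size ys) x ^+ nth 0%N js i * ys`_i.
      apply: eq_bigr => i _; rewrite zsE //; rewrite -/(cc i).
      by field; rewrite addrC natr1; apply: natr_neq0.
    ring.
  rewrite -kE rpredB // rpred_sum // => i _; rewrite rpredM ?rpredX //.
  by rewrite Dzs // -kE rpredM ?rpredV ?rpred_nat // kE yint.
- by rewrite -kE rpred0.
- have szs : size zs = size ys by rewrite size_mkseq.
  rewrite (_ : size (psi :: zs) = (size ys).+1); last by rewrite /= szs.
  rewrite big_ord_recl expr0 mul1r add0r /psi -[LHS](subrK A phi).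
  congr (_ + _); apply: eq_bigr => i _ /=.
  by rewrite !add0n nth_mkseq.
Qed.

End Tay.

Definition integ (z : K) := D z \in k.

Lemma combine n (f : 'I_n -> K) :
  (forall i, exists ys, all integ ys /\ kcomb ys (f i)) ->
  exists ys, all integ ys /\ forall i, kcomb ys (f i).
Proof.
elim: n f => [|n IH] f h; first by exists [::]; split => // [[]].
have [ys1 [h1 k1]] := IH (fun i => f (lift ord0 i)) (fun i => h _).
have [ys0 [h0 k0]] := h ord0.
exists (ys0 ++ ys1); split; first by rewrite all_cat h0 h1.
move=> i; case: (unliftP ord0 i) => [j ->|->].
  by apply: (kcomb_trans (k1 j)) => z hz; apply: kcomb_mem; rewrite mem_cat hz orbT.
by apply: (kcomb_trans k0) => z hz; apply: kcomb_mem; rewrite mem_cat hz.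
Qed.

Section Main.
Let S := kS.
Let kE z : (z \in S) = (z \in k). Proof. by []. Qed.

Lemma main N : forall ys, (size ys < N)%N -> all integ ys ->
  forall n (f : 'I_n -> K), (forall i, kcomb ys (f i)) ->
  forall P : {mpoly K[n]}, P != 0 -> (forall m, P@_m \in k) -> P.@[f] = 0 ->
  exists u : 'I_n -> K,
    [/\ (forall i, u i \in k), (exists i, u i != 0) & \sum_(i < n) u i * f i \in k].
Proof.
elim: N => // N IHN ys hN hys n f hf P P0 Pk Pf.
pose r := size ys.
pose y (s : 'I_r) := ys`_s.
have Hy : forall s, D (y s) \in k by move=> s; apply: (allP hys); apply: mem_nth.
have [b hb] := fin_all_exists hf.
have [c hc] := fin_all_exists hb.
have bk i : b i \in k by case: (hc i).
have ck i j : c i j \in k by case: (hc i) => _ /(_ j).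
have fe i : f i = b i + \sum_(s < r) c i s * ys`_s by case: (hc i).
pose lq := [tuple (b i)%:MP + \sum_(s < r) c i s *: 'X_s | i < n] : n.-tuple {mpoly K[r]}.
pose Q := P \mPo lq.
have lqy i : (tnth lq i).@[y] = f i.
  rewrite tnth_mktuple mevalD mevalC raddf_sum /= fe; congr (_ + _).
  by apply: eq_bigr => s _; rewrite mevalZ mevalXU.
have Qy : Q.@[y] = 0 by rewrite /Q comp_mpoly_meval (meval_eq _ lqy).
have Qk : forall m, Q@_m \in k.
  move=> m; rewrite -kE; move: m; apply/mpolyOverP.
  rewrite /Q comp_mpolyE rpred_sum // => m _.
  apply: mpolyOverZ; first by rewrite kE.
  apply: rpred_prod => i _; apply: rpredX; rewrite tnth_mktuple.
  apply: rpredD; first by rewrite mpolyOverC kE.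
  apply: rpred_sum => s _; apply: mpolyOverZ; first by rewrite kE.
  exact: mpolyOverX.
case: (eqVneq Q 0) => [Q0|Qn0].
  have [[u [uk [i0 ui0] hu]] | [R hR]] := lin (fun i (s : 'I_r) => ck i s).
    exists u; split => //; first by exists i0.
    under eq_bigr do rewrite fe mulrDr mulr_sumr.
    rewrite big_split /= exchange_big /=.
    rewrite [X in _ + X]big1 ?addr0; first by rewrite -kE rpred_sum // => i _; rewrite rpredM.
    move=> s _; under eq_bigr do rewrite mulrA.
    by rewrite -mulr_suml hu mul0r.
  pose lq' := [tuple \sum_(j < n) R s j *: ('X_j - (b j)%:MP) | s < r]
    : r.-tuple {mpoly K[n]}.
  have : Q \mPo lq' = P.
    rewrite /Q comp_mpolyA -[RHS]comp_mpoly_id; congr (P \mPo _).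
    apply: eq_from_tnth => i; rewrite !tnth_mktuple.
    rewrite comp_mpolyD comp_mpolyC raddf_sum /=.
    under eq_bigr do rewrite comp_mpolyZ comp_mpolyXU -tnth_nth tnth_mktuple scaler_sumr.
    rewrite exchange_big /=.
    under eq_bigr do (under eq_bigr do rewrite scalerA; rewrite -scaler_suml hR).
    rewrite (bigD1 i) //= eqxx scale1r big1 ?addr0 => [|j ji].
      by rewrite addrC subrK.
    by rewrite eq_sym (negPf ji) scale0r.
  by rewrite Q0 comp_mpoly0 => /esym /eqP; rewrite (negPf P0).
have [s0 [cc [cs0 cck hsum]]] := KO Hy Qn0 Qk Qy.
pose ys' := take s0 ys ++ drop s0.+1 ys.
have mem' (s : 'I_r) : s != s0 -> ys`_s \in ys'.
  move=> ss0; rewrite mem_cat; apply/orP.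
  case: (ltngtP s s0) => [lt|gt|eq]; last by case/eqP: ss0; apply: val_inj.
    left; rewrite -(@nth_take s0 K 0 s lt ys); apply: mem_nth; rewrite size_take.
    by case: ifP => // _; rewrite (leq_trans lt) // ltnW.
  right; have -> : nat_of_ord s = (s0.+1 + (s - s0.+1))%N by rewrite subnKC.
  rewrite -nth_drop; apply: mem_nth; rewrite size_drop.
  by rewrite ltn_sub2r // (leq_ltn_trans gt).
have ys0 : kcomb ys' (ys`_s0).
  move: hsum; rewrite (bigD1 s0) //= cs0 mul1r => hsum.
  have -> : ys`_s0 = (y s0 + \sum_(s < r | s != s0) cc s * y s) -
                     \sum_(s < r | s != s0) cc s * y s by rewrite addrK.
  apply: kcombB; first exact: kcomb_k.
  apply: kcomb_sum => s hs; apply: kcombZ => //; exact: kcomb_mem (mem' _ hs).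
have all' : forall z, z \in ys -> kcomb ys' z.
  move=> z hz; have hi : (index z ys < r)%N by rewrite index_mem.
  rewrite -(nth_index 0 hz).
  case: (eqVneq (Ordinal hi) s0) => [e|ne]; first by move: ys0; rewrite -e.
  exact: kcomb_mem (mem' _ ne).
apply: (IHN ys' _ _ n f _ P P0 Pk Pf).
- rewrite size_cat size_take size_drop (ltn_ord s0) -/r.
  move: hN; rewrite -/r ltnS => hN; have := ltn_ord s0; lia.
- apply/allP => z; rewrite mem_cat => /orP [/mem_take|/mem_drop] hz; exact: (allP hys).
- by move=> i; apply: (kcomb_trans (hf i)).
Qed.

End Main.

Lemma prop_in x n (f : 'I_n -> K) : x \in k -> D x = 1 ->
  (forall i, iterated_integral D k (f i)) -> alg_dependent k f ->
  exists u : 'I_n -> K,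
    [/\ (forall i, u i \in k), (exists i, u i != 0) & \sum_(i < n) u i * f i \in k].
Proof.
move=> hx dx hf [P [P0 Pk Pf]].
have : forall i, exists ys, all integ ys /\ kcomb ys (f i).
  move=> i; have [m hm] := hf i.
  have [ys [js [b [hys hb e]]]] := tay hx dx hm.
  exists ys; split => //; exists b, (fun j => x ^+ nth 0%N js j); split => //.
  by move=> j; exact: (@rpredX K kS _ x hx).
case/combine => ys [hys hk].
exact: (@main (size ys).+1 ys (ltnSn _) hys n f hk P P0 Pk Pf).
Qed.

End Basics.

Unset Implicit Arguments.
Theorem proposition34 (K : fieldType) (D : K -> K) (k : pred K) (n : nat)
  (f : 'I_n -> K) :
  derivation D -> char0 K -> diff_subfield D k -> same_constants D k ->
  constants_alg_closed D ->
  (exists x, x \in k /\ D x = 1) ->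
  (forall i, iterated_integral D k (f i)) ->
  alg_dependent k f ->
  exists u : 'I_n -> K,
    [/\ (forall i, u i \in k), (exists i, u i != 0) & \sum_(i < n) u i * f i \in k].
Proof.
move=> HD H0 Hk Hc _ [x [hx dx]] hf hd.
exact: (prop_in HD Hk H0 Hc hx dx hf hd).
Qed.
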